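(* Let $M,\Xi\in\mathbb{R}^{\ell\times\ell}$ be symmetric positive semidefinite, suppose $\operatorname{range}(M)=\mathbb{R}^J:=\operatorname{span}\{e_i:i\in J\}$ for some $J\subseteq\{1,\dots,\ell\}$, $\|\Xi\|_{op}\le\lambda_{\min}(M_{(J)})/2$, and $M+\Xi$ is invertible. Then for $x\in\operatorname{range}(M)$, \[ \big|x^\top(M+\Xi)^{-1}x-x_{(J)}^\top M_{(J)}^{-1}x_{(J)}\big|\le2\|M_{(J)}^{-1}\|_{op}^2\,\|\Xi\|_{op}\,\|x\|^2, \] while for $x\notin\operatorname{range}(M)$, \[ x^\top(M+\Xi)^{-1}x\ge\frac{1}{2\|\Xi\|_{op}}\|x_{(J^c)}\|^2 . \]
   Context: For a vector $x$ and index set $J$, $x_{(J)}$ is the restriction of $x$ to the coordinates in $J$; for a matrix $M$, $M_{(J)}$ is the principal submatrix on $J\times J$; $J^c$ is the complement of $J$; $\lambda_{\min}$ denotes the smallest eigenvalue. *)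

(* Defs.v *)
From HB Require Import structures.
From mathcomp Require Import all_boot all_order all_algebra.
From mathcomp Require Import all_classical all_reals.
Set Implicit Arguments. Unset Strict Implicit. Unset Printing Implicit Defensive.
Import Order.TTheory GRing.Theory Num.Theory.
Local Open Scope ring_scope.
Local Open Scope classical_set_scope.

Definition vnorm (R : realType) (n : nat) (x : 'cV[R]_n) : R :=
  Num.sqrt (\sum_(i < n) x i 0 ^+ 2).

Definition opnorm (R : realType) (m n : nat) (A : 'M[R]_(m, n)) : R :=
  sup [set vnorm (A *m x) | x in [set x : 'cV[R]_n | vnorm x = 1]].

Definition lambda_min (R : realType) (n : nat) (A : 'M[R]_n) : R :=
  inf [set a : R | eigenvalue A a].

Definition symmetric (R : realType) (n : nat) (A : 'M[R]_n) : Prop := A^T = A.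

Definition psd (R : realType) (n : nat) (A : 'M[R]_n) : Prop :=
  symmetric A /\ forall x : 'cV[R]_n, 0 <= (x^T *m A *m x) 0 0.

Definition in_range (R : realType) (m n : nat) (A : 'M[R]_(m, n)) (x : 'cV[R]_m) : Prop :=
  exists y : 'cV[R]_n, x = A *m y.

Definition in_coord_span (R : realType) (n : nat) (J : {set 'I_n}) (x : 'cV[R]_n) : Prop :=
  forall i, i \notin J -> x i 0 = 0.

(* Restriction x_(J) of a vector to the coordinates in J (in increasing order). *)
Definition vrestr (R : realType) (n : nat) (J : {set 'I_n}) (x : 'cV[R]_n) : 'cV[R]_#|J| :=
  \col_(i < #|J|) x (enum_val i) 0.

Definition msub (R : realType) (n : nat) (J : {set 'I_n}) (M : 'M[R]_n) : 'M[R]_#|J| :=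
  \matrix_(i < #|J|, j < #|J|) M (enum_val i) (enum_val j).

Definition qform (R : realType) (n : nat) (A : 'M[R]_n) (x : 'cV[R]_n) : R :=
  (x^T *m A *m x) 0 0.

(* Main.v *)
Require Import Defs.
From HB Require Import structures.
From mathcomp Require Import all_boot all_order all_algebra.
From mathcomp Require Import all_classical all_reals.
From mathcomp Require Import lra ring.
Import Order.TTheory GRing.Theory Num.Theory.
Set Implicit Arguments. Unset Strict Implicit. Unset Printing Implicit Defensive.
Local Open Scope ring_scope.

Section Aux.
Variable R : realType.

Definition dot n (x y : 'cV[R]_n) : R := (x^T *m y) 0 0.

Lemma entD m n (A B : 'M[R]_(m, n)) i j : (A + B) i j = A i j + B i j.
Proof. by rewrite !mxE. Qed.
Lemma entB m n (A B : 'M[R]_(m, n)) i j : (A - B) i j = A i j - B i j.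
Proof. by rewrite !mxE. Qed.
Lemma entZ m n (c : R) (A : 'M[R]_(m, n)) i j : (c *: A) i j = c * A i j.
Proof. by rewrite !mxE. Qed.

Lemma dotC n (x y : 'cV[R]_n) : dot x y = dot y x.
Proof. by rewrite /dot -{1}(trmxK y) -trmx_mul mxE. Qed.

Lemma dotE n (x y : 'cV[R]_n) : dot x y = \sum_i x i 0 * y i 0.
Proof. by rewrite /dot mxE; apply: eq_bigr => i _; rewrite mxE. Qed.

Lemma qformE n (A : 'M[R]_n) x : qform A x = dot x (A *m x).
Proof. by rewrite /qform /dot mulmxA. Qed.

Lemma vnormE n (x : 'cV[R]_n) : vnorm x = Num.sqrt (dot x x).
Proof. by rewrite /vnorm dotE; congr Num.sqrt; apply: eq_bigr => i _; rewrite expr2. Qed.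

Lemma dot_ge0 n (x : 'cV[R]_n) : 0 <= dot x x.
Proof. by rewrite dotE; apply: sumr_ge0 => i _; rewrite -expr2 sqr_ge0. Qed.

Lemma vnorm2 n (x : 'cV[R]_n) : vnorm x ^+ 2 = dot x x.
Proof. by rewrite vnormE sqr_sqrtr // dot_ge0. Qed.

Lemma vnorm_ge0 n (x : 'cV[R]_n) : 0 <= vnorm x.
Proof. exact: sqrtr_ge0. Qed.

Lemma dot_eq0 n (x : 'cV[R]_n) : dot x x = 0 -> x = 0.
Proof.
rewrite dotE => /psumr_eq0P H; apply/matrixP => i j; rewrite (ord1 j) mxE.
have := H (fun i0 _ => ltac:(rewrite -expr2; exact: sqr_ge0)) i isT.
by move/eqP; rewrite -expr2 sqrf_eq0 => /eqP.
Qed.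

Lemma CS n (f g : 'I_n -> R) :
  (\sum_i f i * g i) ^+ 2 <= (\sum_i f i ^+ 2) * (\sum_i g i ^+ 2).
Proof.
set a := \sum_i f i ^+ 2; set b := \sum_i g i ^+ 2; set c := \sum_i f i * g i.
have a0 : 0 <= a by apply: sumr_ge0 => i _; apply: sqr_ge0.
have E : \sum_i (a * g i - c * f i) ^+ 2 = a * (a * b - c ^+ 2).
  rewrite (eq_bigr (fun i => a ^+ 2 * g i ^+ 2 - (2 * a * c) * (f i * g i) + c ^+ 2 * f i ^+ 2)); last first.
    by move=> i _; ring.
  rewrite big_split sumrB /= -!mulr_sumr -/a -/b -/c; ring.
have H : 0 <= a * (a * b - c ^+ 2) by rewrite -E; apply: sumr_ge0 => i _; apply: sqr_ge0.
have [az|ap] := eqVneq a 0.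
  have fz : forall i, f i = 0.
    move=> i; move/eqP: az; rewrite psumr_eq0; last by move=> j _; apply: sqr_ge0.
    by move/allP => /(_ i (mem_index_enum _)) /=; rewrite sqrf_eq0 => /eqP.
  have -> : c = 0 by rewrite /c big1 // => i _; rewrite fz mul0r.
  by rewrite expr0n /= mulr_ge0 // ?sumr_ge0 // => i _; apply: sqr_ge0.
have ap' : 0 < a by rewrite lt_def ap a0.
by move: H; rewrite pmulr_rge0 // subr_ge0.
Qed.

Lemma dot_le n (x y : 'cV[R]_n) : dot x y <= vnorm x * vnorm y.
Proof.
apply: le_trans (ler_norm _) _.
rewrite /vnorm -sqrtrM; last by apply: sumr_ge0 => i _; apply: sqr_ge0.
rewrite -sqrtr_sqr dotE; apply: ler_wsqrtr; exact: CS.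
Qed.

Lemma vnormZ n (c : R) (x : 'cV[R]_n) : vnorm (c *: x) = `|c| * vnorm x.
Proof.
rewrite !vnormE /dot -scalemxAr linearZ /= -scalemxAl !entZ mulrA -expr2.
by rewrite sqrtrM ?sqr_ge0 // sqrtr_sqr.
Qed.

Lemma opnorm_ub m n (A : 'M[R]_(m, n)) :
  has_ubound [set vnorm (A *m x) | x in [set x : 'cV[R]_n | vnorm x = 1]].
Proof.
exists (Num.sqrt (\sum_i \sum_j A i j ^+ 2)) => r [x /= hx <-].
rewrite /vnorm; apply: ler_wsqrtr; apply: ler_sum => i _.
have hs : \sum_j x j 0 ^+ 2 = 1.
  by move: hx; rewrite /vnorm => /(congr1 (fun t => t ^+ 2)); rewrite sqr_sqrtr ?expr1n //; apply: sumr_ge0 => j _; apply: sqr_ge0.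
rewrite mxE; apply: le_trans (CS (fun j => A i j) (fun j => x j 0)) _.
by rewrite hs mulr1.
Qed.

Lemma opnorm_ge0 m n (A : 'M[R]_(m, n)) : 0 <= opnorm A.
Proof.
have [[x hx]|nx] := pselect (exists x : 'cV[R]_n, vnorm x = 1).
  apply: le_trans (vnorm_ge0 (A *m x)) _.
  by apply: ub_le_sup; [exact: opnorm_ub | exists x].
rewrite /opnorm (_ : image _ _ = classical_sets.set0) ?sup0 //.
by apply/seteqP; split => r //= [x hx _]; apply: nx; exists x.
Qed.

Lemma opnorm_le m n (A : 'M[R]_(m, n)) x : vnorm (A *m x) <= opnorm A * vnorm x.
Proof.
have [v0|vp] := eqVneq (vnorm x) 0.
  have -> : x = 0 by apply: dot_eq0; rewrite -vnorm2 v0 expr0n.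
  have z0 : vnorm (0 : 'cV[R]_m) = 0 by rewrite vnormE /dot mulmx0 mxE sqrtr0.
  by rewrite mulmx0 z0 -(mulr0 (opnorm A)) -(mulmx0 _ (0 : 'cV[R]_n)) ler_wpM2l ?opnorm_ge0 // ?mulmx0 vnorm_ge0.
have vp' : 0 < vnorm x by rewrite lt_def vp vnorm_ge0.
have H : vnorm (A *m ((vnorm x)^-1 *: x)) <= opnorm A.
  apply: ub_le_sup; first exact: opnorm_ub.
  exists ((vnorm x)^-1 *: x) => //=.
  by rewrite vnormZ ger0_norm ?invr_ge0 ?vnorm_ge0 // mulVf.
move: H; rewrite -scalemxAr vnormZ ger0_norm ?invr_ge0 ?vnorm_ge0 //.
by rewrite ler_pdivrMl // mulrC.
Qed.

Lemma qform_le n (A : 'M[R]_n) x : qform A x <= opnorm A * vnorm x ^+ 2.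
Proof.
rewrite qformE; apply: le_trans (dot_le _ _) _.
rewrite mulrC expr2 mulrA; apply: ler_wpM2r; [exact: vnorm_ge0|exact: opnorm_le].
Qed.

End Aux.

Section Aux2.
Variable R : realType.

Lemma qformD n (A B : 'M[R]_n) x : qform (A + B) x = qform A x + qform B x.
Proof. by rewrite /qform mulmxDr mulmxDl entD. Qed.

Lemma qformZ n (A : 'M[R]_n) c x : qform A (c *: x) = c ^+ 2 * qform A x.
Proof. by rewrite /qform linearZ /= [(c *: x)^T]linearZ /= -!scalemxAl !entZ mulrA -expr2. Qed.

Lemma dotZr n (x y : 'cV[R]_n) c : dot x (c *: y) = c * dot x y.
Proof. by rewrite /dot -scalemxAr entZ. Qed.

Lemma dot0r n (x : 'cV[R]_n) : dot x 0 = 0.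
Proof. by rewrite /dot mulmx0 mxE. Qed.

Lemma dotBr n (x y z : 'cV[R]_n) : dot x (y - z) = dot x y - dot x z.
Proof. by rewrite /dot mulmxBr entB. Qed.

Lemma dotBl n (x y z : 'cV[R]_n) : dot (y - z) x = dot y x - dot z x.
Proof. by rewrite /dot linearB /= mulmxBl entB. Qed.

Lemma dot_symm n (S : 'M[R]_n) x y : Defs.symmetric S -> dot x (S *m y) = dot (S *m x) y.
Proof. by move=> hS; rewrite /dot trmx_mul hS mulmxA. Qed.

Lemma psd_G n (S : 'M[R]_n) u y : psd S ->
  2 * dot u (S *m y) - qform S y <= qform S u.
Proof.
case=> hS hp; have := hp (u - y); rewrite -/(qform S (u - y)) qformE.
rewrite mulmxBr !dotBl !dotBr -!qformE.
rewrite [dot y (S *m u)]dot_symm // [dot (S *m y) u]dotC.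
lra.
Qed.

Lemma inv_ineq n (P : 'M[R]_n) x y : psd P -> P \in unitmx ->
  2 * dot x y - qform P y <= qform (invmx P) x.
Proof.
case=> hS hp hu; set Q := invmx P; set d := y - Q *m x.
have := hp d; rewrite -/(qform P d) qformE.
have -> : P *m d = P *m y - x by rewrite mulmxBr mulmxA mulmxV // mul1mx.
rewrite /d dotBr !dotBl -qformE [dot (Q *m x) (P *m y)]dot_symm; last first.
  exact: hS.
rewrite mulmxA mulmxV // mul1mx [dot (Q *m x) x]dotC -qformE [dot y x]dotC; lra.
Qed.

Lemma inv_eq n (P : 'M[R]_n) x : psd P -> P \in unitmx ->
  qform (invmx P) x = 2 * dot x (invmx P *m x) - qform P (invmx P *m x).
Proof.
case=> hS hp hu; rewrite (qformE P) mulmxA mulmxV // mul1mx [dot _ x]dotC -qformE; lra.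
Qed.

Definition Lm n (J : {set 'I_n}) : 'M[R]_(n, #|J|) :=
  \matrix_(i, k) ((i == enum_val k)%:R).

Lemma LtE n (J : {set 'I_n}) m (A : 'M[R]_(n, m)) k j :
  ((Lm J)^T *m A) k j = A (enum_val k) j.
Proof.
rewrite mxE (bigD1 (enum_val k)) //= big1 ?addr0; last first.
  by move=> i /negPf hi; rewrite !mxE hi mul0r.
by rewrite !mxE eqxx mul1r.
Qed.

Lemma LE n (J : {set 'I_n}) m (A : 'M[R]_(m, n)) i k :
  (A *m Lm J) i k = A i (enum_val k).
Proof.
rewrite mxE (bigD1 (enum_val k)) //= big1 ?addr0; last first.
  by move=> j /negPf hj; rewrite !mxE hj mulr0.
by rewrite !mxE eqxx mulr1.
Qed.

Lemma vrestrE n (J : {set 'I_n}) x : vrestr J x = (Lm J)^T *m x.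
Proof. by apply/matrixP => k j; rewrite (ord1 j) LtE mxE. Qed.

Lemma msubE n (J : {set 'I_n}) M : msub J M = (Lm J)^T *m M *m Lm J.
Proof. by apply/matrixP => k j; rewrite LE LtE mxE. Qed.

Lemma LtL n (J : {set 'I_n}) : (Lm J)^T *m Lm J = 1%:M.
Proof.
apply/matrixP => k j; by rewrite LE !mxE (inj_eq enum_val_inj) [j == k]eq_sym.
Qed.

Lemma LLt n (J : {set 'I_n}) x : in_coord_span J x -> Lm J *m ((Lm J)^T *m x) = x.
Proof.
move=> hx; apply/matrixP => i j; rewrite (ord1 j) mxE.
under eq_bigr => k _ do rewrite LtE mxE.
rewrite -(big_enum_val (fun k => (i == k)%:R * x k 0)) /=.
case: (boolP (i \in J)) => hi.
  rewrite (bigD1 i) //= eqxx mul1r big1 ?addr0 //.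
  by move=> k /andP[_ /negPf]; rewrite eq_sym => ->; rewrite mul0r.
rewrite hx // big1 // => k kJ.
have -> : (i == k) = false by apply/negP => /eqP e; move: hi; rewrite e kJ.
by rewrite mul0r.
Qed.

Lemma L_span n (J : {set 'I_n}) v : in_coord_span J (Lm J *m v).
Proof.
move=> i hi; rewrite mxE big1 // => k _; rewrite mxE.
have -> : (i == enum_val k) = false.
  by apply/negP => /eqP e; move: (enum_valP k); rewrite -e (negPf hi).
by rewrite mul0r.
Qed.

Lemma Mz0 n (M : 'M[R]_n) (J : {set 'I_n}) (z : 'cV[R]_n) :
  psd M -> (forall x, in_range M x <-> in_coord_span J x) ->
  (forall i, i \in J -> z i 0 = 0) -> M *m z = 0.
Proof.
case=> hS _ hR hz; apply: dot_eq0.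
rewrite -dot_symm //; rewrite dotE big1 // => i _.
case: (boolP (i \in J)) => hi; first by rewrite hz // mul0r.
have : in_coord_span J (M *m (M *m z)) by apply/hR; exists (M *m z).
by move/(_ i hi) => ->; rewrite mulr0.
Qed.

End Aux2.

Theorem lemmaE8 (R : realType) (l : nat) (M Xi : 'M[R]_l) (J : {set 'I_l}) :
  psd M -> psd Xi ->
  (forall x : 'cV[R]_l, in_range M x <-> in_coord_span J x) ->
  opnorm Xi <= lambda_min (msub J M) / 2 ->
  M + Xi \in unitmx ->
  (forall x : 'cV[R]_l, in_range M x ->
     `| qform (invmx (M + Xi)) x - qform (invmx (msub J M)) (vrestr J x) |
       <= 2 * opnorm (invmx (msub J M)) ^+ 2 * opnorm Xi * vnorm x ^+ 2) /\
  (forall x : 'cV[R]_l, ~ in_range M x ->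
     qform (invmx (M + Xi)) x >= (2 * opnorm Xi)^-1 * vnorm (vrestr (~: J) x) ^+ 2).
Proof.
move=> hM hX hR _ hU.
have hP : psd (M + Xi).
  case: hM => sM pM; case: hX => sX pX; split.
    by rewrite /Defs.symmetric linearD /= sM sX.
  by move=> x; have := qformD M Xi x; rewrite /qform => ->; exact: addr_ge0.
have qX0 : forall y, 0 <= qform Xi y by case: hX.
have qM0 : forall y, 0 <= qform M y by case: hM.
have sM : Defs.symmetric M by case: hM.
split.
- move=> x hx; have hxJ := (proj1 (hR x) hx).
  set L := Lm R J.
  set A := msub J M.
  have AE : A = L^T *m M *m L by rewrite /A msubE.
  have Ainj : forall c : 'cV[R]_#|J|, A *m c = 0 -> c = 0.
    move=> c hc.
    have w0 : M *m (L *m c) = 0.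
      have hw : in_coord_span J (M *m (L *m c)) by apply/hR; exists (L *m c).
      have e : L^T *m (M *m (L *m c)) = A *m c by rewrite AE !mulmxA.
      by rewrite -(LLt hw) e hc mulmx0.
    have [y hy] : in_range M (L *m c) by apply/hR; apply: L_span.
    have : dot (L *m c) (L *m c) = 0.
      by rewrite {1}hy -dot_symm // w0 dot0r.
    move/dot_eq0 => h.
    by rewrite -(mul1mx c) -(LtL R J) -mulmxA -/L h mulmx0.
  have Au : A \in unitmx.
    rewrite -row_free_unit -kermx_eq0; apply/eqP/row_matrixP => i.
    rewrite row0; set v := row i (kermx A).
    have hv : v *m A = 0 by rewrite /v -row_mul mulmx_ker row0.
    have sA : A^T = A by rewrite AE !trmx_mul trmxK sM mulmxA.
    have : A *m v^T = 0 by rewrite -sA -trmx_mul hv trmx0.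
    by move/Ainj => /(congr1 trmx); rewrite trmxK trmx0.
  set u := invmx A *m (L^T *m x).
  set ut := L *m u.
  have Aux : A *m u = L^T *m x by rewrite /u mulmxA mulmxV // mul1mx.
  have Mut : M *m ut = x.
    have hw : in_coord_span J (M *m ut) by apply/hR; exists ut.
    have e : L^T *m (M *m ut) = A *m u by rewrite AE /ut !mulmxA.
    by rewrite -(LLt hw) e Aux LLt.
  set a := qform (invmx (M + Xi)) x.
  set b := qform (invmx A) (vrestr J x).
  have dxu : dot x ut = qform M ut by rewrite qformE dotC Mut.
  have bE : b = qform M ut.
    rewrite -dxu /b vrestrE /qform trmx_mul trmxK -!mulmxA -/u /dot /ut.
    by rewrite mulmxA.
  have hab : a <= b.
    rewrite /a inv_eq // qformD bE.
    set y0 := invmx (M + Xi) *m x.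
    have := psd_G ut y0 hM; have := qX0 y0.
    have -> : dot x y0 = dot ut (M *m y0) by rewrite -Mut -dot_symm.
    lra.
  have hba : b - qform Xi ut <= a.
    have := inv_ineq x ut hP hU; rewrite qformD -/a; move: dxu bE; lra.
  have hXu : qform Xi ut <= opnorm Xi * vnorm u ^+ 2.
    have -> : vnorm u = vnorm ut.
      by rewrite !vnormE /dot /ut [(L *m u)^T]trmx_mul mulmxA -[u^T *m L^T *m L]mulmxA /L LtL mulmx1.
    exact: qform_le.
  have hux : vnorm u <= opnorm (invmx A) * vnorm x.
    have -> : vnorm x = vnorm (L^T *m x).
      by rewrite !vnormE /dot trmx_mul trmxK -mulmxA LLt.
    exact: opnorm_le.
  have n0 := opnorm_ge0 Xi; have k0 := opnorm_ge0 (invmx A).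
  have u0 := vnorm_ge0 u; have x0 := vnorm_ge0 x.
  have h2 : vnorm u ^+ 2 <= (opnorm (invmx A) * vnorm x) ^+ 2.
    by rewrite ler_pXn2r // ?nnegrE // mulr_ge0.
  have h3 : opnorm Xi * vnorm u ^+ 2 <= opnorm Xi * (opnorm (invmx A) * vnorm x) ^+ 2.
    by rewrite ler_wpM2l.
  rewrite ler0_norm; last by lra.
  have h4 : 0 <= opnorm Xi * (opnorm (invmx A) * vnorm x) ^+ 2.
    by rewrite mulr_ge0 // sqr_ge0.
  rewrite -/a -/b; move: h4 h3; rewrite exprMn; lra.
- move=> x _.
  set z : 'cV[R]_l := \col_i (if i \in ~: J then x i 0 else 0).
  set s := vnorm (vrestr (~: J) x) ^+ 2.
  have s0 : 0 <= s by rewrite /s sqr_ge0.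
  have sE : s = \sum_(i in ~: J) x i 0 ^+ 2.
    rewrite /s /vnorm sqr_sqrtr; last by apply: sumr_ge0 => i _; apply: sqr_ge0.
    under eq_bigr => k _ do rewrite mxE.
    by symmetry; rewrite big_enum_val.
  have dxz : dot x z = s.
    rewrite sE dotE [RHS]big_mkcond /=; apply: eq_bigr => i _; rewrite mxE.
    by case: ifP => _; rewrite ?mulr0 // expr2.
  have dzz : dot z z = s.
    rewrite sE dotE [RHS]big_mkcond /=; apply: eq_bigr => i _; rewrite mxE.
    by case: ifP => _; rewrite ?mulr0 // expr2.
  have Mz : M *m z = 0.
    apply: (Mz0 hM hR) => i hi; rewrite mxE inE hi //.
  have qMz : qform M z = 0 by rewrite qformE Mz dot0r.
  have hq : qform Xi z <= opnorm Xi * s by rewrite -dzz -vnorm2 qform_le.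
  have qz0 := qX0 z.
  set c := opnorm Xi.
  have a0 : 0 <= qform (invmx (M + Xi)) x.
    have := inv_ineq x 0 hP hU.
    by rewrite dot0r /qform mulmx0 mxE mulr0 subrr.
  have [cp|cn] := ltP 0 c; last first.
    apply: le_trans a0; apply: mulr_le0_ge0 => //.
    by rewrite invr_le0; lra.
  have := inv_ineq x (c^-1 *: z) hP hU.
  rewrite qformZ dotZr dxz qformD qMz add0r.
  set t := c^-1.
  have t0 : 0 < t by rewrite invr_gt0.
  have ct : c * t = 1 by rewrite mulfV // gt_eqF.
  have h1 : t ^+ 2 * qform Xi z <= t ^+ 2 * (c * s) by rewrite ler_wpM2l // sqr_ge0.
  have -> : (2 * c)^-1 = t / 2 by rewrite invfM mulrC.
  have e : t ^+ 2 * (c * s) = t * s by rewrite expr2 mulrA -(mulrA t t c) (mulrC t c) ct mulr1.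
  rewrite e in h1.
  have ts : 0 <= t * s by rewrite mulr_ge0 // ltW.
  move: ts h1; nra.
Qed.
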